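(* Let $p$ be a prime and let $G \cong \mathbb{Z}_{p^{e_1}}\oplus\mathbb{Z}_{p^{e_2}}\oplus\cdots\oplus\mathbb{Z}_{p^{e_l}}$, where $1\le e_1\le e_2\le\cdots\le e_l$ are integers, so $G$ has exponent $n=p^{e_l}$. Let $A$ be a non-empty subset of $]p^{e_l}[=\{1,2,\dots,p^{e_l}\}$ such that the elements of $A$ are pairwise incongruent modulo $p$ and none of them is divisible by $p$. Then \[ d_A(G)\le \left\lceil \frac{1}{|A|}\Big(1+\sum_{i=1}^{l}(p^{e_i}-1)\Big)\right\rceil . \]
   Context: For an integer $x\ge1$, $]x[=\{1,2,\dots,x\}$. Let $G$ be a finite abelian group (written additively) of exponent $n$ and let $\emptyset\ne A\subseteq\, ]n[$. The constant $d_A(G)$ is the least positive integer $t$ such that for every sequence $g_1,\dots,g_t$ of (not necessarily distinct) elements of $G$ there exist $\ell\ge1$, indices $1\le i_1<\dots<i_\ell\le t$ and elements $a_1,\dots,a_\ell\in A$ (repetitions allowed) with $\sum_{j=1}^{\ell}a_j g_{i_j}=0$ in $G$. $\lceil x\rceil$ denotes the smallest integer $\ge x$. *)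

(* Defs.v *)
From mathcomp Require Import all_boot.
Set Implicit Arguments. Unset Strict Implicit. Unset Printing Implicit Defensive.

(* G = Z_{p^{e 0}} (+) ... (+) Z_{p^{e (l-1)}}, elements are dependent tuples
   of residues. *)
Definition Gelt (p l : nat) (e : nat -> nat) : Type :=
  forall i : 'I_l, 'I_(p ^ e i).

Definition A_weighted_zero_subsum (p l : nat) (e : nat -> nat) (A : seq nat)
  (t : nat) (g : 'I_t -> Gelt p l e) : Prop :=
  exists (S : {set 'I_t}) (a : 'I_t -> nat),
    S != set0 /\ (forall j, j \in S -> a j \in A) /\
    forall i : 'I_l, (\sum_(j in S) a j * g j i) %% p ^ e i = 0.

Definition dA_property (p l : nat) (e : nat -> nat) (A : seq nat) (t : nat) : Prop :=
  forall g : 'I_t -> Gelt p l e, A_weighted_zero_subsum A g.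

Definition is_dA (p l : nat) (e : nat -> nat) (A : seq nat) (d : nat) : Prop :=
  0 < d /\ dA_property p l e A d /\
  forall t, 0 < t -> dA_property p l e A t -> d <= t.

Definition ceil_div (m k : nat) : nat := (m + k.-1) %/ k.

(* Main.v *)
Require Import Defs.
From HB Require Import structures.
From mathcomp Require Import all_boot all_order all_algebra zify.
From Stdlib Require Import Classical.
Import GRing.Theory.
Set Implicit Arguments. Unset Strict Implicit. Unset Printing Implicit Defensive.
Local Open Scope ring_scope.


Lemma sum_ind1 l (i0 : 'I_l) : (\sum_(i < l) (i == i0) = 1)%N.
Proof. by rewrite (bigD1 i0) //= eqxx big1 // => i /negbTE ->. Qed.

Lemma nilp (R : comNzRingType) (K : R -> Prop) (K0 : K 0)
  (KD : forall a b, K a -> K b -> K (a + b)) (KM : forall r a, K a -> K (r * a))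
  (l : nat) (z : 'I_l -> R) (q : 'I_l -> nat) (Kz : forall i, K (z i ^+ q i))
  (T : Type) (v : T -> R)
  (Jv : forall x, exists r : 'I_l -> R, v x = \sum_i r i * z i) :
  forall (s : seq T) (m : 'I_l -> nat),
  (1 + \sum_(i < l) (q i - 1) <= size s + \sum_(i < l) m i)%N ->
  K (\prod_(x <- s) v x * \prod_(i < l) z i ^+ m i).
Proof.
have KMr : forall r a, K a -> K (a * r) by move=> r a Ka; rewrite mulrC; apply: KM.
elim => [|x s IH] m Hb.
  have [i Hi] : exists i, (q i <= m i)%N.
    case: (boolP [exists i, (q i <= m i)%N]) => [/existsP//|]; rewrite negb_exists => /forallP H.
    have : (\sum_(i < l) m i <= \sum_(i < l) (q i - 1))%N.
      apply: leq_sum => i _; move: (H i); rewrite -ltnNge; lia.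
    move: Hb; rewrite /= add0n; lia.
  rewrite big_nil mul1r (bigD1 i) //= -(subnK Hi) exprD.
  by apply: KMr; apply: KM.
rewrite big_cons -mulrA.
have [r ->] := Jv x.
rewrite big_distrl /=.
apply: (big_ind K) => //= i _.
set m' := fun i' : 'I_l => (m i' + (i' == i))%N.
have -> : r i * z i * (\prod_(y <- s) v y * \prod_(i0 < l) z i0 ^+ m i0) =
  r i * (\prod_(y <- s) v y * \prod_(i0 < l) z i0 ^+ m' i0).
  rewrite /m'. under [X in _ = _ * (_ * X)]eq_bigr do rewrite exprD.
  rewrite big_split /= [X in _ = _ * (_ * (_ * X))](bigD1 i) //= eqxx expr1.
  rewrite [\prod_(j | j != i) _]big1 ?mulr1; last by move=> j /negbTE ->.
  by rewrite -!mulrA; congr (_ * _); rewrite mulrCA; congr (_ * _); rewrite mulrC.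
apply: KM; apply: IH.
rewrite /m' big_split /= sum_ind1; move: Hb => /=; lia.
Qed.

Section GRing.
Variables (H : finZmodType) (F : comNzRingType).

Definition gring := {ffun H -> F}.
HB.instance Definition _ := GRing.Zmodule.on gring.

Definition gmul (f g : gring) : gring := [ffun x => \sum_y f y * g (x - y)].
Definition gone : gring := [ffun x => (x == 0)%:R].

Lemma gmulC : commutative gmul.
Proof.
move=> f g; apply/ffunP => x; rewrite !ffunE.
rewrite (reindex_inj (inv_inj (subKr x))) /=.
by apply: eq_bigr => y _; rewrite subKr mulrC.
Qed.

Lemma gmulA : associative gmul.
Proof.
move=> f g h; apply/ffunP => x; rewrite !ffunE.
symmetry.
under eq_bigr do rewrite ffunE big_distrl.
under [RHS]eq_bigr do rewrite ffunE big_distrr.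
rewrite exchange_big /=; apply: eq_bigr => z _.
rewrite (reindex_inj (addIr z)) /=; apply: eq_bigr => w _.
by rewrite addrK mulrA opprD addrA [x - w - z]addrAC.
Qed.

Lemma gmul1 : left_id gone gmul.
Proof.
move=> f; apply/ffunP => x; rewrite !ffunE (bigD1 0) //= ffunE eqxx mul1r subr0.
by rewrite big1 ?addr0 // => y /negbTE Hy; rewrite ffunE Hy mul0r.
Qed.

Lemma gmulDl : left_distributive gmul +%R.
Proof.
move=> f g h; apply/ffunP => x; rewrite !ffunE -big_split /=.
by apply: eq_bigr => y _; rewrite ffunE mulrDl.
Qed.

Lemma gone_neq0 : gone != 0.
Proof. by apply/eqP => /ffunP /(_ 0); rewrite !ffunE eqxx; apply/eqP; exact: oner_neq0. Qed.

HB.instance Definition _ := GRing.Zmodule_isComNzRing.Build gring gmulA gmulC gmul1 gmulDl gone_neq0.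

Definition delta (h : H) : gring := [ffun x => (x == h)%:R].

Lemma mulE (f g : gring) x : (f * g) x = \sum_y f y * g (x - y).
Proof. by rewrite /GRing.mul /= ffunE. Qed.

Lemma delta0 : delta 0 = 1.
Proof. by []. Qed.

Lemma deltaD a b : delta (a + b) = delta a * delta b.
Proof.
apply/ffunP => x; rewrite mulE ffunE (bigD1 a) //= !ffunE eqxx mul1r.
rewrite big1 ?addr0; last by move=> y /negbTE Hy; rewrite ffunE Hy mul0r.
by rewrite subr_eq addrC.
Qed.

Lemma deltaX a n : delta a ^+ n = delta (a *+ n).
Proof.
elim: n => [|n IH]; first by rewrite expr0 mulr0n delta0.
by rewrite exprS IH mulrS deltaD.
Qed.

Lemma delta_mul h (g : gring) x : (delta h * g) x = g (x - h).
Proof.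
rewrite mulrC mulE (bigD1 (x - h)) //= ffunE subKr eqxx mulr1.
rewrite big1 ?addr0 // => y Hy; rewrite ffunE.
case: eqP => [E|]; last by rewrite mulr0.
by move: Hy; rewrite -E subKr eqxx.
Qed.

Lemma natr_gE n x : (n%:R : gring) x = (x == 0)%:R *+ n.
Proof. by change (((1 : gring) *+ n) x = (x == 0)%:R *+ n); rewrite ffunMnE /= /GRing.one /= ffunE. Qed.

Variable (K : pred H).
Hypothesis K0 : 0 \in K.
Hypothesis KB : forall a b, a \in K -> b \in K -> a - b \in K.

Definition phi (f : gring) : F := \sum_(x in K) f x.

Lemma phiD f g : phi (f + g) = phi f + phi g.
Proof. by rewrite /phi -big_split; apply: eq_bigr => x _; rewrite ffunE. Qed.
Lemma phi0 : phi 0 = 0.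
Proof. by rewrite /phi big1 // => x _; rewrite ffunE. Qed.
Lemma phiB f g : phi (f - g) = phi f - phi g.
Proof. by rewrite /phi -sumrB; apply: eq_bigr => x _; rewrite !ffunE. Qed.
Lemma phiMn f n : phi (f *+ n) = phi f *+ n.
Proof. by rewrite /phi -sumrMnl; apply: eq_bigr => x _; rewrite ffunMnE. Qed.

Lemma phi_shift h g : h \in K -> phi (delta h * g) = phi g.
Proof.
move=> Kh; rewrite /phi; under eq_bigr do rewrite delta_mul.
rewrite (reindex_inj (addIr h)) /=.
apply: eq_big => [x|x _]; last by rewrite addrK.
apply/idP/idP => Hx; first by rewrite -(addrK h x) KB.
by rewrite -(opprK h) KB // -sub0r KB.
Qed.

Lemma phi_delta h : phi (delta h) = (h \in K)%:R.
Proof.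
rewrite /phi; case: (boolP (h \in K)) => Kh.
  rewrite (bigD1 h) //= ffunE eqxx big1 ?addr0 // => x /andP[_ /negbTE Hx].
  by rewrite ffunE Hx.
by rewrite big1 // => x Kx; rewrite ffunE; case: eqP Kx => // ->; rewrite (negbTE Kh).
Qed.

End GRing.

Lemma binom_rec (a m : nat) : (a * 'C(a, m) = m * 'C(a, m) + m.+1 * 'C(a, m.+1))%N.
Proof.
rewrite mul_bin_left; case: (leqP m a) => h; first by rewrite -mulnDl addnC subnK.
by rewrite bin_small // !muln0.
Qed.

Lemma vand (F : fieldType) (T : seq nat) : uniq T ->
  (forall a b, a \in T -> b \in T -> a != b -> (a%:R : F) != b%:R) ->
  forall c : nat -> F,
  (forall m, (m < size T)%N -> \sum_(a <- T) c a * 'C(a, m)%:R = 0) ->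
  forall a, a \in T -> c a = 0.
Proof.
elim: T => // a0 T IH /= /andP[na0 uT] Hd c Hs.
have Hc' : forall a, a \in T -> c a * (a%:R - a0%:R) = 0.
  have HdT : forall a b, a \in T -> b \in T -> a != b -> (a%:R : F) != b%:R.
    by move=> a b Ha Hb; apply: Hd; rewrite inE ?Ha ?Hb orbT.
  apply: (IH uT HdT (fun a => c a * (a%:R - a0%:R))).
  move=> m Hm.
  have -> : \sum_(a <- T) c a * (a%:R - a0%:R) * 'C(a, m)%:R =
     \sum_(a <- a0 :: T) c a * (a%:R - a0%:R) * 'C(a, m)%:R.
    by rewrite big_cons subrr mulr0 mul0r add0r.
  have -> : \sum_(a <- a0 :: T) c a * (a%:R - a0%:R) * 'C(a, m)%:R =
    \sum_(a <- a0 :: T) (m%:R * (c a * 'C(a, m)%:R) + m.+1%:R * (c a * 'C(a, m.+1)%:R)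
       - a0%:R * (c a * 'C(a, m)%:R)).
    apply: eq_bigr => a _.
    rewrite mulrBr mulrBl -mulrA -natrM binom_rec natrD !natrM.
    congr (_ - _); last by rewrite mulrCA mulrA.
    by rewrite mulrDr !mulrA ![c a * _]mulrC.
  rewrite sumrB big_split /= -!mulr_sumr !Hs /=; try lia.
  by rewrite !mulr0 subr0 addr0.
have HT : forall a, a \in T -> c a = 0.
  move=> a Ha; have := Hc' a Ha; move/eqP; rewrite mulf_eq0 subr_eq0 => /orP[/eqP //|/eqP E].
  have Hne : a != a0 by apply/eqP => E'; move: na0; rewrite -E' Ha.
  have Ha' : a \in a0 :: T by rewrite inE Ha orbT.
  by move: (Hd a a0 Ha' (mem_head _ _) Hne); rewrite E eqxx.
have H0 := Hs 0%N isT.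
rewrite big_cons bin0 mulr1 big_seq big1 ?addr0 in H0; last first.
  by move=> a Ha; rewrite HT ?mul0r.
by move=> a; rewrite inE => /orP[/eqP ->//|]; apply: HT.
Qed.

Lemma exists_coef (F : fieldType) (A : seq nat) : uniq A ->
  (forall a b, a \in A -> b \in A -> a != b -> (a%:R : F) != b%:R) ->
  exists d : 'I_(size A) -> F, forall m, (m < size A)%N ->
    \sum_(i < size A) d i * 'C(nth 0%N A i, m)%:R = (m == 0%N)%:R.
Proof.
move=> uA Hd; set k := size A.
pose M : 'M[F]_k := \matrix_(i, j) 'C(nth 0%N A i, j)%:R.
have fM : row_free M.
  apply: inj_row_free => v Hv; apply/rowP => i; rewrite mxE.
  pose c x := \sum_(j < k | nth 0%N A j == x) v 0 j.
  have cE : forall i : 'I_k, c (nth 0%N A i) = v 0 i.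
    move=> j; rewrite /c (big_pred1 j) // => j'.
    by rewrite nth_uniq.
  rewrite -cE; apply: (vand uA Hd); last by apply: mem_nth.
  move=> m Hm; rewrite (big_nth 0%N) big_mkord.
  have := congr1 (fun w : 'rV[F]_k => w 0 (Ordinal Hm)) Hv; rewrite !mxE => E.
  rewrite -[RHS]E; apply: eq_bigr => j _; by rewrite cE mxE.
have uM : M \in unitmx by rewrite -row_free_unit.
pose e : 'rV[F]_k := \row_j ((j : nat) == 0%N)%:R.
exists (fun i => (e *m invmx M) 0 i) => m Hm.
have := congr1 (fun w : 'rV[F]_k => w 0 (Ordinal Hm)) (mulmxKV uM e).
rewrite !mxE => E; rewrite -[RHS]E; apply: eq_bigr => i _; by rewrite [M _ _]mxE.
Qed.

Lemma factor (R : comNzRingType) (p : nat) (chp : p \in [pchar R]) (I : finType)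
  (c w : I -> nat) (k : nat) (y : R) :
  (forall m, (m < k)%N -> (p %| \sum_b c b * 'C(w b, m))%N) ->
  exists s, \sum_b (c b)%:R * y ^+ w b = (y - 1) ^+ k * s.
Proof.
move=> Hd; set z := y - 1; set N := (\sum_b w b)%N.
have Ey : forall b, y ^+ w b = \sum_(m < N.+1) ('C(w b, m))%:R * z ^+ m.
  move=> b; have -> : y = z + 1 by rewrite subrK.
  have wN : (w b < N.+1)%N by rewrite ltnS /N (bigD1 b) //= leq_addr.
  rewrite exprD1n (big_ord_widen N.+1 (fun m => z ^+ m *+ 'C(w b, m))) // big_mkcond /=.
  apply: eq_bigr => m _; case: ifP => Hm; first by rewrite mulr_natl.
  by rewrite bin_small ?mul0r // ltnNge -ltnS Hm.
exists (\sum_(m < N.+1) (\sum_b c b * 'C(w b, m))%N%:R * (if (k <= m)%N then z ^+ (m - k) else 0)).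
rewrite mulr_sumr; under eq_bigr do rewrite Ey mulr_sumr.
rewrite exchange_big /=; apply: eq_bigr => m _.
have -> : \sum_b (c b)%:R * (('C(w b, m))%:R * z ^+ m) =
   (\sum_b c b * 'C(w b, m))%N%:R * z ^+ m.
  by rewrite natr_sum mulr_suml; apply: eq_bigr => b _; rewrite natrM mulrA.
case: leqP => Hk; first by rewrite mulrCA -exprD subnKC.
have := Hd m Hk; rewrite (dvdn_pcharf chp) => /eqP ->.
by rewrite !mul0r mulr0.
Qed.

Definition HH (Q l : nat) := {ffun 'I_l -> 'Z_Q}.
HB.instance Definition _ Q l := Finite.on (HH Q l).
HB.instance Definition _ Q l := GRing.Zmodule.on (HH Q l).

Lemma dvdn_modr' d m n : (d %| m)%N -> (d %| n %% m)%N = (d %| n)%N.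
Proof. by move=> dm; rewrite {2}(divn_eq n m) dvdn_addr // dvdn_mull. Qed.

Section Main.
Variables (p l : nat) (e : nat -> nat).
Hypothesis pp : prime p.
Hypothesis l0 : (0 < l)%N.
Hypothesis e1 : forall i, (i < l)%N -> (1 <= e i)%N.
Hypothesis emono : forall i j, (i <= j < l)%N -> (e i <= e j)%N.

Let Q := (p ^ e l.-1)%N.

Lemma Q1 : (1 < Q)%N.
Proof.
have p1 := prime_gt1 pp; have : (l.-1 < l)%N by lia.
move=> /e1.
rewrite /Q; case: (e l.-1) => // n _; rewrite expnS.
have := expn_gt0 p n; rewrite (prime_gt0 pp) /=; nia.
Qed.

Lemma dvdQ (i : 'I_l) : (p ^ e i %| Q)%N.
Proof. apply: dvdn_exp2l; apply: emono; have := ltn_ord i; lia. Qed.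

Definition G := HH Q l.
Definition Kset : pred G := fun x => [forall i : 'I_l, p ^ e i %| x i]%N.

Lemma valZ (x : 'Z_Q) : (x < Q)%N.
Proof. by apply: leq_trans (ltn_ord x) _; rewrite Zp_cast // Q1. Qed.

Lemma Kset0 : 0 \in Kset.
Proof. by apply/forallP => i; rewrite ffunE. Qed.

Lemma KsetB a b : a \in Kset -> b \in Kset -> a - b \in Kset.
Proof.
move=> /forallP Ha /forallP Hb; apply/forallP => i; rewrite !ffunE.
move: (Ha i) (Hb i); set x := a i; set y := b i => hx hy.
have E : x - y = (x + (Q - y))%:R.
  have HQ : (Q%:R : 'Z_Q) = 0 by apply: val_inj; rewrite /= val_Zp_nat ?Q1 // modnn.
  by rewrite natrD natrB ?HQ ?(ltnW (valZ y)) // !natr_Zp sub0r.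
rewrite E val_Zp_nat ?Q1 // dvdn_modr' ?dvdQ // dvdn_add // dvdn_sub // ?dvdQ.
all: done.
Qed.

Definition R := gring G 'F_p.
Definition dl (h : G) : R := delta 'F_p h.
Definition eps (i : 'I_l) : G := [ffun i' => ((i' == i) : nat)%:R].
Definition zz (i : 'I_l) : R := dl (eps i) - 1.
Definition JJ (v : R) := exists r : 'I_l -> R, v = \sum_i r i * zz i.
Local Notation ph := (phi Kset).
Definition KK (f : R) := forall g : R, ph (f * g) = 0.

Lemma pR : p \in [pchar R].
Proof.
apply/andP; split => //; apply/eqP/ffunP => x; rewrite natr_gE ffunE.
by rewrite -mulr_natr (pcharf0 (pchar_Fp pp)) mulr0.
Qed.

Lemma pnat_pe n : ([pchar R]).-nat (p ^ n)%N.
Proof. by rewrite pnatX pnatE // pR. Qed.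

Lemma ph_shift h g : h \in Kset -> ph (dl h * g) = ph g.
Proof. exact: (phi_shift Kset0 KsetB). Qed.

Lemma KKz i : KK (zz i ^+ (p ^ e i)).
Proof.
rewrite /zz (exprDn_pchar _ _ (pnat_pe _)) (exprNn_pchar _ (pnat_pe _)) expr1n.
rewrite /dl deltaX => g; rewrite mulrBl mul1r phiB.
rewrite (phi_shift Kset0 KsetB) ?subrr //.
apply/forallP => i'; rewrite ffunMnE ffunE.
have -> : (((i' == i) : nat)%:R : 'Z_Q) *+ p ^ e i = ((i' == i) * p ^ e i)%N%:R.
  by rewrite natrM mulr_natr.
rewrite val_Zp_nat ?Q1 //.
rewrite dvdn_modr' ?dvdQ //; case: eqP => [->|_]; by rewrite ?mul1n ?mul0n.
Qed.

Lemma KK0 : KK 0.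
Proof. by move=> g; rewrite mul0r phi0. Qed.
Lemma KKD a b : KK a -> KK b -> KK (a + b).
Proof. by move=> Ha Hb g; rewrite mulrDl phiD Ha Hb addr0. Qed.
Lemma KKM r a : KK a -> KK (r * a).
Proof. by move=> Ha g; rewrite -mulrA mulrCA Ha. Qed.

Lemma JJ0 : JJ 0.
Proof. by exists (fun=> 0); rewrite big1 // => i _; rewrite mul0r. Qed.

Lemma JJ_mul u w : JJ (u - 1) -> JJ (w - 1) -> JJ (u * w - 1).
Proof.
move=> [r1 E1] [r2 E2]; exists (fun i => r1 i * w + r2 i).
have -> : u * w - 1 = (u - 1) * w + (w - 1) by rewrite mulrBl mul1r addrA subrK.
rewrite E1 E2 mulr_suml -big_split /=; apply: eq_bigr => i _.
by rewrite mulrDl mulrAC.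
Qed.

Lemma JJ_z i n : JJ (dl (eps i) ^+ n - 1).
Proof.
rewrite subrX1; exists (fun i' => (i' == i)%:R * \sum_(m < n) dl (eps i) ^+ m).
rewrite (bigD1 i) //= eqxx mul1r [\sum_(j | j != i) _]big1 ?addr0; first by rewrite /zz mulrC.
by move=> j /negbTE ->; rewrite !mul0r.
Qed.

Lemma G_decomp (h : G) : h = \sum_(i < l) eps i *+ (h i : nat).
Proof.
apply/ffunP => i'; rewrite sum_ffunE (bigD1 i') //= ffunMnE ffunE eqxx big1.
  by rewrite addr0 [RHS]/= -[RHS]/((h i' : nat)%:R) natr_Zp.
by move=> j /negbTE Hj; rewrite ffunMnE ffunE eq_sym Hj mul0rn.
Qed.

Lemma JJ_gen (h : G) : JJ (dl h - 1).
Proof.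
rewrite (G_decomp h).
have -> : dl (\sum_(i < l) eps i *+ (h i : nat)) = \prod_(i < l) dl (eps i) ^+ (h i : nat).
  rewrite (big_morph (dl) (@deltaD _ _) (@delta0 _ _)).
  by apply: eq_bigr => i _; rewrite /dl deltaX.
apply: (big_ind (fun u => JJ (u - 1))).
- by rewrite subrr; exact: JJ0.
- exact: JJ_mul.
- move=> i _; exact: JJ_z.
Qed.


Definition hg (x : Gelt p l e) : G := [ffun i => ((x i : nat)%:R : 'Z_Q)].

Variable A : seq nat.
Hypothesis uA : uniq A.
Hypothesis Adist : forall a b, a \in A -> b \in A -> a = b %[mod p] -> a = b.

Lemma distF a b : a \in A -> b \in A -> a != b -> (a%:R : 'F_p) != b%:R.
Proof.
move=> Ha Hb Hne; apply/eqP => E; move/eqP: Hne; apply.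
have chp := pchar_Fp pp.
wlog ab : a b Ha Hb E / (a <= b)%N.
  move=> W; case: (leqP a b) => h; first exact: W.
  by apply: esym; apply: W => //; rewrite ltnW.
apply: Adist => //; apply/eqP; by rewrite eq_sym eqn_mod_dvd // (dvdn_pcharf chp) natrB // E subrr.
Qed.

Lemma Kset_sum (X : nat) (i : 'I_l) : (p ^ e i %| ((X%:R : 'Z_Q) : nat))%N = (p ^ e i %| X)%N.
Proof. by rewrite val_Zp_nat ?Q1 // dvdn_modr' ?dvdQ. Qed.

Lemma Gsum I r P (F : I -> G) i : (\sum_(j <- r | P j) F j) i = \sum_(j <- r | P j) F j i.
Proof. by apply: (big_morph (fun x : G => x i)) => [a b|]; rewrite ffunE. Qed.
Lemma GMn (x : HH Q l) n i : ((x : HH Q l) *+ n) i = x i *+ n.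
Proof. by elim: n => [|n IH]; rewrite ?mulr0n ?mulrS ffunE ?IH. Qed.


Lemma main t (g : 'I_t -> Gelt p l e) :
  (1 + \sum_(i < l) (p ^ e i - 1) <= t * size A)%N -> A_weighted_zero_subsum A g.
Proof.
move=> Hb.
case: (classic (A_weighted_zero_subsum A g)) => // Hno; exfalso.
have [d Hd] := exists_coef uA distF.
set k := size A in d Hd Hb.
pose w (b : 'I_k.+1) : nat := if unlift ord0 b is Some i then nth 0%N A i else 0%N.
pose cc (b : 'I_k.+1) : nat := if unlift ord0 b is Some i then (d i : nat) else p.-1.
have chp := pchar_Fp pp.
have Hpm1 : ((p.-1)%:R : 'F_p) = -1.
  by rewrite -subn1 natrB ?prime_gt0 // (pcharf0 chp) sub0r.
have Hc : forall m, (m < k)%N -> (p %| \sum_b cc b * 'C(w b, m))%N.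
  move=> m Hm; rewrite (dvdn_pcharf chp) natr_sum big_ord_recl /cc /w unlift_none /=.
  under eq_bigr do rewrite liftK natrM natr_Zp.
  rewrite Hd // natrM Hpm1 bin0n mulN1r addrC subr_eq0.
  by case: (m == 0%N).
have [s Hs] : exists s : 'I_t -> R, forall j,
    \sum_b (cc b)%:R * dl (hg (g j)) ^+ w b = (dl (hg (g j)) - 1) ^+ k * s j.
  have Hf : forall j : 'I_t, exists sj : R,
      \sum_b (cc b)%:R * dl (hg (g j)) ^+ w b = (dl (hg (g j)) - 1) ^+ k * sj.
    move=> j; exact: (factor pR (dl (hg (g j))) Hc).
  have [s' Hs'] := fin_all_exists Hf; by exists s'.
pose P := \prod_(j < t) \sum_b (cc b)%:R * dl (hg (g j)) ^+ w b.
have P0 : phi Kset P = 0.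
  rewrite -[P]mulr1; suff HK : KK P by apply: HK.
  rewrite /P; under eq_bigr do rewrite Hs; rewrite big_split /= mulrC; apply: KKM.
  pose T : finType := ('I_t * 'I_k)%type.
  have := @nilp R KK KK0 KKD KKM l zz (fun i => p ^ e i)%N KKz T
     (fun x => dl (hg (g x.1)) - 1) (fun x => JJ_gen _) (enum T) (fun=> 0%N).
  have E1 : \prod_(i < l) zz i ^+ 0 = 1 by rewrite big1 // => i _; rewrite expr0.
  rewrite E1 mulr1.
  rewrite big_enum /= -(pair_big xpredT xpredT (fun j s => dl (hg (g j)) - 1)) /=.
  have E2 : \prod_(i < t) \prod_(j < k) (dl (hg (g i)) - 1) = \prod_(i < t) (dl (hg (g i)) - 1) ^+ k.
    by apply: eq_bigr => i _; rewrite prodr_const card_ord.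
  rewrite -E2; apply; rewrite -cardE card_prod !card_ord.
  by rewrite [X in (_ <= _ + X)%N]big1 ?addn0.
have Eσ : forall σ : {ffun 'I_t -> 'I_k.+1},
    phi Kset (\prod_j ((cc (σ j))%:R * dl (hg (g j)) ^+ w (σ j))) =
    ((\sum_j hg (g j) *+ w (σ j)) \in Kset)%:R *+ (\prod_j cc (σ j))%N.
  move=> σ; rewrite big_split /= -natr_prod mulr_natl phiMn; congr (_ *+ _).
  rewrite (eq_bigr (fun j => dl (hg (g j) *+ w (σ j)))); last by move=> j _; rewrite /dl deltaX.
  by rewrite -(big_morph dl (@deltaD _ _) (@delta0 _ _)) phi_delta.
have Pne : phi Kset P = ((p.-1 ^ t)%N)%:R.
  rewrite /P bigA_distr_bigA /= (big_morph (phi Kset) (@phiD _ _ Kset) (@phi0 _ _ Kset)).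
  under eq_bigr do rewrite Eσ.
  rewrite (bigD1 [ffun=> ord0]) //= [X in _ + X]big1.
    rewrite addr0 big1; last by move=> j _; rewrite ffunE /w unlift_none mulr0n.
    rewrite Kset0; under eq_bigr do rewrite ffunE /cc unlift_none.
    by rewrite prod_nat_const card_ord.
  move=> σ Hσ; case HK: (_ \in Kset); last by rewrite mul0rn.
  exfalso; apply: Hno.
  exists [set j | σ j != ord0], (fun j => w (σ j)); split; [|split].
  - apply/set0Pn.
    have [j Hj] : exists j, σ j != ord0.
      case: (boolP [exists j, σ j != ord0]) => [/existsP //|].
      rewrite negb_exists => /forallP H; exfalso; move/eqP: Hσ; apply.
      by apply/ffunP => j; rewrite ffunE; apply/eqP; move: (H j); rewrite negbK.
    by exists j; rewrite inE.
  - move=> j; rewrite inE /w; case: unliftP => [i' _ _|-> ]; last by rewrite eqxx.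
    by rewrite mem_nth.
  - move=> i; suff: (p ^ e i %| \sum_(j in [set j | σ j != ord0]) w (σ j) * g j i)%N by move/eqP.
    move/forallP: HK => /(_ i) HK.
    have E : (\sum_(j < t) hg (g j) *+ w (σ j)) i = ((\sum_(j < t) g j i * w (σ j))%N)%:R.
      rewrite Gsum natr_sum; apply: eq_bigr => j _.
      by rewrite GMn ffunE natrM mulr_natr.
    move: HK; rewrite E Kset_sum.
    suff -> : (\sum_(j in [set j | σ j != ord0]) w (σ j) * g j i = \sum_(j < t) g j i * w (σ j))%N by [].
    rewrite big_mkcond; apply: eq_bigr => j _; rewrite inE.
    case: eqP => [->|_]; last by rewrite mulnC.
    by rewrite /w unlift_none muln0.
move: P0; rewrite Pne => /eqP; rewrite -(dvdn_pcharf chp) Euclid_dvdX //.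
have p1 := prime_gt1 pp; move=> /andP[/dvdn_leq H _]; move: H; lia.
Qed.

End Main.
Local Close Scope ring_scope.
Unset Implicit Arguments. Set Strict Implicit. Set Printing Implicit Defensive.

Lemma ex_min_prop (P : nat -> Prop) n : P n -> exists d, P d /\ forall t, P t -> d <= t.
Proof.
elim: n {-2}n (leqnn n) => [|n IH] m Hm Pm.
  by exists m; split => // t _; move: Hm; lia.
case: (classic (exists t, P t /\ t < m)) => [[t [Pt Ht]]|H].
  by apply: (IH t) => //; lia.
exists m; split => // t Pt; rewrite leqNgt; apply/negP => Ht; apply: H; by exists t.
Qed.

Theorem theorem1 (p l : nat) (e : nat -> nat) (A : seq nat) :
  prime p -> 0 < l ->
  (forall i, i < l -> 1 <= e i) ->
  (forall i j, i <= j < l -> e i <= e j) ->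
  A != [::] -> uniq A ->
  (forall a, a \in A -> 1 <= a <= p ^ e l.-1) ->
  (forall a, a \in A -> ~~ (p %| a)) ->
  (forall a b, a \in A -> b \in A -> a = b %[mod p] -> a = b) ->
  exists d, is_dA p l e A d /\
    d <= ceil_div (1 + \sum_(i < l) (p ^ e i - 1)) (size A).
Proof.
move=> pp l0 e1 emono An0 uA _ _ Adist.
set D := 1 + _; set k := size A.
have k0 : 0 < k by rewrite lt0n size_eq0.
set N := ceil_div D k.
have HN : forall t, D <= t * k -> dA_property p l e A t.
  by move=> t Ht g; apply: (main pp l0 e1 emono uA Adist).
have DN : D <= N * k.
  rewrite /N /ceil_div.
  have := divn_eq (D + k.-1) k; have := ltn_pmod (D + k.-1) k0; lia.
have N0 : 0 < N by move: DN; rewrite /D; case: (N) => //; lia.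
have [d [[d0 Pd] Hmin]] := @ex_min_prop (fun t => 0 < t /\ dA_property p l e A t) N
   (conj N0 (HN N DN)).
exists d; split; last by apply: Hmin; split => //; exact: HN.
split => //; split => // t t0 Pt; exact: Hmin.
Qed.
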